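(* Let $k\in\mathbb N$, $E\subseteq W(A)$ and $\vec s=(s_n(x))_{n=0}^\infty\in V^\infty(A)$ such that $E$ is $k$-large in $\vec s$. Then there exist $m\in\mathbb N$ and $w(x)\in\langle (s_n(x))_{n=0}^m\,\|\,(A_{k+n})_{n=0}^m\rangle_v$ such that $\{w(a):a\in A_k\}\subseteq E$.
   Context: $\mathbb N=\{0,1,2,\dots\}$. Fix an increasing sequence $A_0\subseteq A_1\subseteq A_2\subseteq\cdots$ of finite nonempty alphabets and set $A=\bigcup_{n\in\mathbb N}A_n$. $W(A)$ denotes the set of all finite words over $A$, including the empty word; words are concatenated by juxtaposition. Fix a symbol $x\notin A$. A variable word over $A$ is a finite word over $A\cup\{x\}$ in which $x$ occurs at least once; $V(A)$ is the set of variable words. For $s(x)\in V(A)$ and $a\in A\cup\{x\}$, $s(a)$ is obtained by replacing every occurrence of $x$ by $a$. $V^\infty(A)$ is the set of infinite sequences of variable words. For a sequence $(s_n(x))_{n\in I}$ of variable words and a sequence $(B_n)_{n\in I}$ of finite subsets of $A$, both indexed by a set $I\subseteq\mathbb N$ that is either a finite interval or of the form $\{m,m+1,\dots\}$: the constant span $\langle (s_n(x))_{n\in I}\,\|\,(B_n)_{n\in I}\rangle_c$ is the set of all words $s_{l_0}(a_0)s_{l_1}(a_1)\cdots s_{l_j}(a_j)$ with $j\ge0$, $l_0<\dots<l_j$ in $I$ and $a_i\in B_{l_i}$ for each $i$; the variable span $\langle (s_n(x))_{n\in I}\,\|\,(B_n)_{n\in I}\rangle_v$ is the set of all words $s_{l_0}(a_0)\cdots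 s_{l_j}(a_j)$ with $j\ge0$, $l_0<\dots<l_j$ in $I$, $a_i\in B_{l_i}\cup\{x\}$ for each $i$, and at least one $a_i=x$. (E.g. $(A_{k+n})_{n=p}^{q}$ denotes the sequence $B_n=A_{k+n}$, $p\le n\le q$.) Extracted $k$-subsequences: let $k\in\mathbb N$ and $\vec s=(s_n(x))_{n=0}^\infty\in V^\infty(A)$. A finite sequence $(t_n(x))_{n=0}^l$ of variable words is an extracted $k$-subsequence of $\vec s$ if there exist integers $0=m_0<m_1<\dots<m_{l+1}$ with $t_i(x)\in\langle (s_n(x))_{n=m_i}^{m_{i+1}-1}\,\|\,(A_{k+n})_{n=m_i}^{m_{i+1}-1}\rangle_v$ for all $0\le i\le l$. An infinite sequence $\vec t=(t_n(x))_{n=0}^\infty$ is an extracted $k$-subsequence of $\vec s$ if each initial segment $(t_n(x))_{n=0}^l$ is a finite extracted $k$-subsequence of $\vec s$. We write $\vec t\le_k\vec s$. A set $E\subseteq W(A)$ is $k$-large in $\vec s\in V^\infty(A)$ if $E\cap\langle\vec w\,\|\,(A_{k+n})_{n=0}^\infty\rangle_c\neq\emptyset$ for every $\vec w\in V^\infty(A)$ with $\vec w\le_k\vec s$. *)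

(* Defs.v *)
From mathcomp Require Import all_boot.
Set Implicit Arguments. Unset Strict Implicit. Unset Printing Implicit Defensive.

(* Words over A are [seq T]; words over A ∪ {x} are [seq (option T)],
   where [None] is the variable symbol x (so x ∉ A automatically). *)

Section Words.
Variable T : eqType.

Definition inA (Al : nat -> seq T) (a : T) : Prop := exists n, a \in Al n.

Definition is_word (Al : nat -> seq T) (w : seq T) : Prop :=
  forall a, a \in w -> inA Al a.

Definition is_vword (Al : nat -> seq T) (w : seq (option T)) : Prop :=
  None \in w /\ forall a, Some a \in w -> inA Al a.

Definition subst_c (s : seq (option T)) (a : T) : seq T :=
  map (fun c => if c is Some b then b else a) s.

Definition subst_v (s : seq (option T)) (o : option T) : seq (option T) :=
  map (fun c => if c is Some b then Some b else o) s.

(* constant span < (s_n)_{n in I} || (B_n)_{n in I} >_c :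
   words s_{l_0}(a_0) ... s_{l_j}(a_j), j >= 0, l_0 < ... < l_j in I, a_i ∈ B_{l_i} *)
Definition cspan (I : nat -> Prop) (s : nat -> seq (option T))
    (B : nat -> seq T) (w : seq T) : Prop :=
  exists ps : seq (nat * T),
    [/\ 0 < size ps,
        sorted ltn (map fst ps),
        (forall p, p \in ps -> I p.1 /\ p.2 \in B p.1) &
        w = flatten (map (fun p => subst_c (s p.1) p.2) ps)].

(* variable span < (s_n)_{n in I} || (B_n)_{n in I} >_v :
   as above but a_i ∈ B_{l_i} ∪ {x}, with at least one a_i = x *)
Definition vspan (I : nat -> Prop) (s : nat -> seq (option T))
    (B : nat -> seq T) (w : seq (option T)) : Prop :=
  exists ps : seq (nat * option T),
    [/\ 0 < size ps,
        sorted ltn (map fst ps),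
        (forall p, p \in ps ->
            I p.1 /\ (if p.2 is Some a then a \in B p.1 else True)),
        None \in map snd ps &
        w = flatten (map (fun p => subst_v (s p.1) p.2) ps)].

(* finite extracted k-subsequence (t_0, ..., t_l) of s (here t = [:: t_0; ...; t_l]) *)
Definition ext_fin (Al : nat -> seq T) (k : nat) (t : seq (seq (option T)))
    (s : nat -> seq (option T)) : Prop :=
  exists ms : seq nat,
    [/\ size ms = (size t).+1,
        nth 0 ms 0 = 0,
        sorted ltn ms &
        forall i, i < size t ->
          vspan (fun n => nth 0 ms i <= n <= (nth 0 ms i.+1).-1) s
                (fun n => Al (k + n)) (nth [::] t i)].

Definition ext_le (Al : nat -> seq T) (k : nat) (t s : nat -> seq (option T)) : Prop :=
  forall l, ext_fin Al k (mkseq t l.+1) s.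

Definition k_large (Al : nat -> seq T) (k : nat) (E : seq T -> Prop)
    (s : nat -> seq (option T)) : Prop :=
  forall w : nat -> seq (option T),
    (forall n, is_vword Al (w n)) -> ext_le Al k w s ->
    exists u, E u /\ cspan (fun _ => True) w (fun n => Al (k + n)) u.

End Words.

(* Main.v *)
Require Import Defs.
From mathcomp Require Import all_boot.
From Stdlib Require Import ClassicalEpsilon Classical.
Set Implicit Arguments. Unset Strict Implicit. Unset Printing Implicit Defensive.

Fixpoint allseqs (C : eqType) (n : nat) (cs : seq C) : seq (seq C) :=
  if n is n'.+1 then [seq x :: y | x <- cs, y <- allseqs n' cs] else [:: [::]].
Arguments allseqs {C}.

Lemma mem_allseqs (C : eqType) n (cs : seq C) w :
  (w \in allseqs n cs) = (size w == n) && all (mem cs) w.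
Proof.
elim: n w => [|n IH] [|x w] //=.
  by apply/allpairsP => -[[a b]] /= [_ _ ].
rewrite eqSS; apply/allpairsP/idP.
  by case=> [[a b]] /= [Ha Hb [-> ->]]; move: Hb; rewrite IH Ha => /andP[-> ->].
by case/andP=> Hs /andP[Hx Hw]; exists (x, w) => /=; rewrite IH Hs Hw.
Qed.

Lemma size_allseqs (C : eqType) n (cs : seq C) : size (allseqs n cs) = size cs ^ n.
Proof. by elim: n => [|n IH] //=; rewrite size_allpairs IH expnS. Qed.

Definition pt (L : seq (option nat)) (i : nat) : seq nat := map (fun o => odflt i o) L.

Definition valid (r N : nat) (L : seq (option nat)) : Prop :=
  [/\ size L = N, None \in L & forall o, Some o \in L -> o < r].

Definition HJ (r c : nat) : Prop :=
  exists N, forall (C : eqType) (cs : seq C) (col : seq nat -> C),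
    size cs <= c -> (forall w, col w \in cs) ->
    exists L, valid r N L /\ forall i, i < r -> col (pt L i) = col (pt L 0).

Definition Foc (r c s : nat) : Prop :=
  exists N, forall (C : eqType) (cs : seq C) (col : seq nat -> C),
    size cs <= c -> (forall w, col w \in cs) ->
    (exists L, valid r.+1 N L /\ forall i, i < r.+1 -> col (pt L i) = col (pt L 0))
    \/ (exists (f : seq nat) (Ls : seq (seq (option nat))),
         [/\ size f = N, (forall o, o \in f -> o < r.+1), size Ls = s,
             uniq (map (fun L => col (pt L 0)) Ls) &
             forall L, L \in Ls -> [/\ valid r.+1 N L, pt L r = f &
                 forall i, i < r -> col (pt L i) = col (pt L 0)]]).

Lemma pt_cat L1 L2 i : pt (L1 ++ L2) i = pt L1 i ++ pt L2 i.
Proof. by rewrite /pt map_cat. Qed.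

Lemma pt_some (y : seq nat) i : pt (map Some y) i = y.
Proof. by rewrite /pt -map_comp map_id. Qed.

Lemma pt_mem r L i x : (forall o, Some o \in L -> o < r) -> i < r -> x \in pt L i -> x < r.
Proof.
move=> HL Hi /mapP [[o|] Ho ->] //=; exact: HL.
Qed.

Lemma size_pt L i : size (pt L i) = size L.
Proof. by rewrite size_map. Qed.

Lemma Foc_step r c s : (forall c', HJ r c') -> Foc r c s -> Foc r c s.+1.
Proof.
move=> IHr [n Hn].
pose X := allseqs n (iota 0 r.+1).
have [m Hm] := IHr (c ^ size X).
exists (n + m) => C cs col Hcs Hcol.
pose col' y := map (fun x => col (x ++ y)) X.
have Hcol' : forall y, col' y \in allseqs (size X) cs.
  by move=> y; rewrite mem_allseqs size_map eqxx /=; apply/allP => z /mapP [x _ ->]; exact: Hcol.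
have Hcs' : size (allseqs (size X) cs) <= c ^ size X.
  by rewrite size_allseqs leq_exp2r // size_allseqs size_iota expn_gt0.
have [M [[HMs HMn HMo] HMc]] := Hm _ _ col' Hcs' Hcol'.
have HX : forall x, size x = n -> (forall o, o \in x -> o < r.+1) -> x \in X.
  move=> x Hs Ho; rewrite mem_allseqs Hs eqxx andTb; apply/allP => z Hz.
  have HH : z \in iota 0 r.+1 by rewrite mem_iota add0n Ho. exact: HH.
have Hptv : forall L i, valid r.+1 n L -> i < r.+1 -> pt L i \in X.
  move=> L i [Ls _ Lo] Hi; apply: HX; first by rewrite size_pt.
  move=> o; exact: pt_mem.
have HcolM : forall x i, x \in X -> i < r -> col (x ++ pt M i) = col (x ++ pt M 0).
  move=> x i Hx Hi; have := HMc i Hi; move/eq_in_map => H; exact: H.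
pose col'' x := col (x ++ pt M 0).
have Hvext : forall L, valid r.+1 n L -> valid r.+1 (n + m) (L ++ map Some (pt M 0)).
  move=> L [Ls Ln Lo]; split.
  - by rewrite size_cat size_map size_pt Ls HMs.
  - by rewrite mem_cat Ln.
  - move=> o; rewrite mem_cat => /orP [/Lo //|/mapP [y Hy [->]]].
    by move: Hy => /mapP [[o'|] Ho' ->] //=; apply: ltnW; apply: HMo.
have Hmono : forall L, valid r.+1 n L -> (forall i, i < r.+1 -> col'' (pt L i) = col'' (pt L 0)) ->
   exists L', valid r.+1 (n + m) L' /\ forall i, i < r.+1 -> col (pt L' i) = col (pt L' 0).
  move=> L HL HLc; exists (L ++ map Some (pt M 0)); split; first exact: Hvext.
  by move=> i Hi; rewrite !pt_cat !pt_some; apply: HLc.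
have [[L [HL HLc]]|[f [Ls [Hf Hfo HLs Hu HLsp]]]] := Hn _ _ col'' Hcs (fun w => Hcol _).
  by left; apply: Hmono HL HLc.
have HfX : f \in X by apply: HX.
case: (boolP (col'' f \in map (fun L => col'' (pt L 0)) Ls)) => Hin.
  left; case/mapP: Hin => L HL Heq.
  have [HLv HLf HLc] := HLsp L HL.
  apply: (Hmono L HLv) => i; rewrite ltnS leq_eqVlt => /orP [/eqP ->|Hi].
    by rewrite HLf Heq.
  exact: HLc.
right; exists (f ++ pt M r), ([seq L ++ M | L <- Ls] ++ [:: map Some f ++ M]).
have HvM : forall L, valid r.+1 n L -> valid r.+1 (n + m) (L ++ M).
  move=> L [Ls' Ln Lo]; split.
  - by rewrite size_cat Ls' HMs.
  - by rewrite mem_cat Ln.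
  - by move=> o; rewrite mem_cat => /orP [/Lo //|/HMo /ltnW].
split.
- by rewrite size_cat Hf size_pt HMs.
- move=> o; rewrite mem_cat => /orP [/Hfo //|]; case/mapP => [[o'|] Ho' ->] //=.
  by apply: ltnW; apply: HMo.
- by rewrite size_cat size_map HLs addn1.
- rewrite map_cat -map_comp cat_uniq /= andbT.
  have -> : [seq (fun L => col (pt L 0)) (x ++ M) | x <- Ls] = map (fun L => col'' (pt L 0)) Ls.
    by apply: eq_map => L; rewrite /= pt_cat.
  by rewrite Hu /= pt_cat pt_some orbF Hin.
move=> L; rewrite mem_cat => /orP [/mapP [L0 HL0 ->]|].
  have [HLv HLf HLc] := HLsp L0 HL0.
  split; first exact: HvM.
    by rewrite pt_cat HLf.
  move=> i Hi; rewrite !pt_cat HcolM; last by [].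
    exact: (HLc i Hi).
  apply: Hptv => //; exact: ltnW.
rewrite mem_seq1 => /eqP ->; split.
- split.
  + by rewrite size_cat size_map Hf HMs.
  + by rewrite mem_cat HMn orbT.
  + move=> o; rewrite mem_cat => /orP [/mapP [y Hy [->]]|/HMo /ltnW //].
    exact: Hfo.
- by rewrite pt_cat pt_some.
- by move=> i Hi; rewrite !pt_cat !pt_some HcolM.
Qed.

Lemma Foc0 r c : Foc r c 0.
Proof.
exists 0 => C cs col _ _; right; exists [::], [::]; split => //.
Qed.

Lemma HJ0 c : HJ 0 c.
Proof.
exists 1 => C cs col _ _; exists [:: None]; split => //.
Qed.

Lemma HJ_all r c : HJ r c.
Proof.
elim: r c => [|r IH] c; first exact: HJ0.
have : forall s, Foc r c s.
  elim=> [|s IHs]; first exact: Foc0.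
  by apply: Foc_step; [exact: IH | exact: IHs].
move/(_ c)=> [N HN]; exists N => C cs col Hcs Hcol.
have [//|[f [Ls [Hf Hfo HLs Hu HLsp]]]] := HN C cs col Hcs Hcol.
pose U := map (fun L => col (pt L 0)) Ls.
have HU : {subset U <= cs} by move=> z /mapP [L _ ->].
have Hsz : c <= size U by rewrite size_map HLs.
have [_ HUeq] := uniq_min_size Hu HU (leq_trans Hcs Hsz).
have : col f \in U by rewrite HUeq; apply: Hcol.
case/mapP => L HL Heq; have [HLv HLf HLc] := HLsp L HL.
exists L; split => // i; rewrite ltnS leq_eqVlt => /orP [/eqP ->|Hi].
  by rewrite HLf.
exact: HLc.
Qed.

Lemma subst_cv (T : eqType) (x : seq (option T)) o b :
  subst_c (subst_v x o) b = subst_c x (odflt b o).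
Proof. by elim: x => [|[c|] x IH] //=; rewrite IH //; case: o. Qed.

Lemma subst_c_flat (T : eqType) (L : seq (seq (option T))) b :
  subst_c (flatten L) b = flatten (map (fun x => subst_c x b) L).
Proof. by rewrite /subst_c map_flatten. Qed.

Lemma subst_v_some (T : eqType) (x : seq (option T)) c :
  subst_v x (Some c) = map Some (subst_c x c).
Proof. by elim: x => [|[d|] x IH] //=; rewrite IH. Qed.

Lemma subst_v_none (T : eqType) (x : seq (option T)) : subst_v x None = x.
Proof. by elim: x => [|[d|] x IH] //=; rewrite IH. Qed.

Lemma subst_c_some (T : eqType) (p : seq T) b : subst_c (map Some p) b = p.
Proof. by rewrite /subst_c -map_comp map_id. Qed.

Lemma subst_c_cat (T : eqType) (x y : seq (option T)) b :
  subst_c (x ++ y) b = subst_c x b ++ subst_c y b.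
Proof. by rewrite /subst_c map_cat. Qed.

Lemma ltn_transitive : transitive ltn.
Proof. exact: ltn_trans. Qed.

Section Main.
Variables (T : eqType) (Al : nat -> seq T).
Hypothesis HAne : forall n, 0 < size (Al n).
Hypothesis HAinc : forall n a, a \in Al n -> a \in Al n.+1.
Variables (k : nat) (E : seq T -> Prop) (s : nat -> seq (option T)).
Hypothesis Hs : forall n, is_vword Al (s n).
Hypothesis H : forall m w, vspan (fun n => n <= m) s (fun n => Al (k + n)) w ->
  exists a, a \in Al k /\ ~ E (subst_c w a).

Lemma Al_mono i j a : i <= j -> a \in Al i -> a \in Al j.
Proof.
move=> /subnK <-; elim: (j - i) => [|d IH] Ha; first by rewrite add0n.
by rewrite addSn; apply: HAinc; apply: IH.
Qed.

Definition rep (p : seq T) (M : nat) : Prop :=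
  exists qs : seq (nat * T),
    [/\ pairwise ltn (map fst qs),
        forall q, q \in qs -> q.1 < M /\ q.2 \in Al (k + q.1) &
        p = flatten (map (fun q => subst_c (s q.1) q.2) qs)].

Definition Inv (n : nat) (P : seq (seq T)) (M : nat) : Prop :=
  n <= M /\ forall p, p \in P -> rep p M.

Definition Q (n : nat) (P : seq (seq T)) (M : nat) (t : seq (option T)) (N : nat) : Prop :=
  [/\ 0 < N, vspan (fun j => M <= j <= (M + N).-1) s (fun j => Al (k + j)) t,
      is_vword Al t &
      forall p b, p \in P -> b \in Al (k + n) -> ~ E (p ++ subst_c t b)].

Lemma exQ n P M : Inv n P M -> exists tN : seq (option T) * nat, Q n P M tN.1 tN.2.
Proof.
move=> [HnM HP].
have [a0 _] : exists a0 : T, true by case: (Al (k+n)) (HAne (k+n)) => [|a ?] //; exists a.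
set A := Al (k + n).
set r := size A.
pose img (y : seq nat) : seq T :=
  flatten [seq subst_c (s (M + i)) (nth a0 A (nth 0 y i)) | i <- iota 0 (size y)].
pose dec (X : Prop) : bool := if excluded_middle_informative X then true else false.
have decP : forall X, dec X -> X by move=> X; rewrite /dec; case: excluded_middle_informative.
have decT : forall X : Prop, X -> dec X by move=> X HX; rewrite /dec; case: excluded_middle_informative.
pose col (y : seq nat) : seq bool := map (fun p => dec (E (p ++ img y))) P.
have [N HN] := HJ_all r (2 ^ size P).
have Hsz : size (allseqs (size P) [:: true; false]) <= 2 ^ size P by rewrite size_allseqs.
have Hmem : forall y, col y \in allseqs (size P) [:: true; false].
  move=> y; rewrite mem_allseqs size_map eqxx /=; apply/allP => z _.
  by case: z.
have [L [[HLs HLn HLo] HLc]] := HN _ _ col Hsz Hmem.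
have HN0 : 0 < N by rewrite -HLs; case: (L) HLn.
pose ps := [seq (M + i, omap (nth a0 A) (nth None L i)) | i <- iota 0 N].
pose t := flatten (map (fun q => subst_v (s q.1) q.2) ps).
have key : forall b, b \in A -> subst_c t b = img (pt L (index b A)).
  move=> b Hb; rewrite /t subst_c_flat -map_comp /img size_pt HLs -map_comp.
  congr flatten; apply/eq_in_map => i; rewrite mem_iota add0n /= => Hi.
  rewrite subst_cv (nth_map None); last by rewrite HLs.
  by case: (nth None L i) => [o|] //=; rewrite nth_index.
have Hfst : map fst ps = iota M N by rewrite -map_comp -[M]addn0 iotaDl addn0.
have Hpsmem : forall q, q \in ps -> M <= q.1 <= (M + N).-1 /\
    (if q.2 is Some a then a \in Al (k + q.1) else True).
  move=> q /mapP [i]; rewrite mem_iota add0n /= => Hi -> /=.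
  split; first by rewrite leq_addr /= -ltnS prednK ?ltn_add2l // addn_gt0 HN0 orbT.
  case Hni: (nth None L i) => [o|] //=.
  have Ho : Some o \in L by rewrite -Hni mem_nth // HLs.
  apply: (@Al_mono (k + n)); first by rewrite leq_add2l (leq_trans HnM) // leq_addr.
  by apply: mem_nth; apply: HLo.
have HpsN : (M + index None L, None) \in ps.
  apply/mapP; exists (index None L); first by rewrite mem_iota add0n /= -HLs index_mem.
  by rewrite nth_index.
have HNps : None \in map snd ps by apply/mapP; exists (M + index None L, None).
exists (t, N); split => //=.
- exists ps; split => //.
  + by rewrite size_map size_iota.
  + by rewrite Hfst iota_ltn_sorted.
- split.
  + apply/flattenP; exists (subst_v (s (M + index None L)) None).
      by apply/mapP; exists (M + index None L, None).
    by rewrite subst_v_none; case: (Hs (M + index None L)).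
  + move=> a /flattenP [x /mapP [q Hq ->]] /mapP [[c|] Hc].
      by case=> ->; case: (Hs q.1) => _; apply.
    case: (Hpsmem q Hq) => _; case: (q.2) => [a'|] // Ha [->].
    by exists (k + q.1).
- move=> p b Hp Hb HE.
  have Hall : forall a, a \in A -> E (p ++ subst_c t a).
    move=> a Ha; rewrite key //; apply: decP.
    have Hc : col (pt L (index a A)) = col (pt L (index b A)).
      by rewrite HLc ?index_mem // [RHS]HLc ?index_mem.
    move/eq_in_map: Hc => /(_ p Hp) /= ->.
    by apply: decT; rewrite -key.
  have [qs [Hqs Hqm Hpeq]] := HP p Hp.
  pose W := map Some p ++ t.
  have HW : vspan (fun j => j <= (M + N).-1) s (fun j => Al (k + j)) W.
    exists (map (fun q => (q.1, Some q.2)) qs ++ ps); split.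
    - by rewrite size_cat /ps !size_map size_iota addn_gt0 HN0 orbT.
    - rewrite (sorted_pairwise ltn_transitive) map_cat pairwise_cat Hfst.
      have -> : [seq x.1 | x <- [seq (q.1, Some q.2) | q <- qs]] = map fst qs.
        by rewrite -map_comp; apply: eq_map.
      rewrite Hqs -(sorted_pairwise ltn_transitive) iota_ltn_sorted !andbT.
      apply/allrelP => x y /mapP [q Hq ->]; rewrite mem_iota => /andP [Hy _].
      exact: leq_trans (proj1 (Hqm q Hq)) Hy.
    - move=> q; rewrite mem_cat => /orP [/mapP [q' Hq' ->] /=|/Hpsmem [/andP [_ H1] H2] //].
      have [Hq1 Hq2] := Hqm q' Hq'; split => //.
      by rewrite -ltnS prednK ?addn_gt0 ?HN0 ?orbT // ltn_addr.
    - by rewrite map_cat mem_cat HNps orbT.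
    - rewrite /W map_cat flatten_cat -map_comp; congr (_ ++ _).
      rewrite Hpeq map_flatten -map_comp; congr flatten; apply: eq_map => q /=.
      by rewrite subst_v_some.
  have [a [Ha HnE]] := H HW.
  apply: HnE; rewrite /W subst_c_cat subst_c_some; apply: Hall.
  by apply: (@Al_mono k); rewrite ?leq_addr.
Qed.

Lemma exQ' n P M : exists tN : seq (option T) * nat, Inv n P M -> Q n P M tN.1 tN.2.
Proof.
case: (classic (Inv n P M)) => HI.
  by have [tN HQ] := exQ HI; exists tN.
by exists ([::], 0).
Qed.

Definition ch n P M : seq (option T) * nat :=
  proj1_sig (constructive_indefinite_description _ (exQ' n P M)).

Lemma chP n P M : Inv n P M -> Q n P M (ch n P M).1 (ch n P M).2.
Proof. rewrite /ch; case: constructive_indefinite_description => tN HtN /=; exact: HtN. Qed.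

Fixpoint state (n : nat) : seq (seq T) * nat :=
  if n is n'.+1 then
    let st := state n' in
    let c := ch n' st.1 st.2 in
    (st.1 ++ [seq p ++ subst_c c.1 b | p <- st.1, b <- Al (k + n')], st.2 + c.2)
  else ([:: [::]], 0).

Definition w n := (ch n (state n).1 (state n).2).1.
Definition Nn n := (ch n (state n).1 (state n).2).2.

Lemma rep_mono p M M' : M <= M' -> rep p M -> rep p M'.
Proof.
move=> HM [qs [H1 H2 H3]]; exists qs; split => // q Hq.
by have [? ?] := H2 q Hq; split => //; apply: leq_trans HM.
Qed.

Lemma Inv_step n P M t N : Inv n P M -> Q n P M t N ->
  Inv n.+1 (P ++ [seq p ++ subst_c t b | p <- P, b <- Al (k + n)]) (M + N).
Proof.
move=> [HnM HP] [HN [ps [_ Hps Hpsm _ Ht]] _ _]; split.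
  by rewrite -addn1 leq_add.
move=> p; rewrite mem_cat => /orP [/HP|/allpairsP [[p0 b] /= [Hp0 Hb ->]]].
  by apply: rep_mono; rewrite leq_addr.
have [qs [Hqs Hqm Hpeq]] := HP p0 Hp0.
exists (qs ++ map (fun q => (q.1, odflt b q.2)) ps); split.
- rewrite map_cat pairwise_cat Hqs.
  have -> : [seq x.1 | x <- [seq (q.1, odflt b q.2) | q <- ps]] = map fst ps.
    by rewrite -map_comp; apply: eq_map.
  rewrite -(sorted_pairwise ltn_transitive) Hps !andbT.
  apply/allrelP => x y /mapP [q Hq ->] /mapP [q' Hq' ->].
  have [/andP [H1 _] _] := Hpsm q' Hq'.
  exact: leq_trans (proj1 (Hqm q Hq)) H1.
- move=> q; rewrite mem_cat => /orP [/Hqm [H1 H2]|/mapP [q' Hq' ->] /=].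
    by split => //; apply: ltn_addr.
  have [/andP [H1 H2] H3] := Hpsm q' Hq'.
  split; first by apply: leq_ltn_trans H2 _; rewrite prednK // addn_gt0 HN orbT.
  case: (q'.2) H3 => [a|] //= _.
  by apply: (@Al_mono (k + n)); rewrite // leq_add2l (leq_trans HnM).
- rewrite map_cat flatten_cat Hpeq; congr (_ ++ _).
  rewrite Ht subst_c_flat -!map_comp; congr flatten; apply: eq_map => q /=.
  by rewrite subst_cv.
Qed.

Lemma Inv_state n : Inv n (state n).1 (state n).2.
Proof.
elim: n => [|n IH].
  by split => // p; rewrite mem_seq1 => /eqP ->; exists [::].
by apply: Inv_step IH (chP IH).
Qed.

Lemma Q_state n : Q n (state n).1 (state n).2 (w n) (Nn n).
Proof. exact: chP (Inv_state n). Qed.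

Lemma pref n ps : pairwise ltn (map fst ps) ->
  (forall q, q \in ps -> q.1 < n /\ q.2 \in Al (k + q.1)) ->
  flatten (map (fun q => subst_c (w q.1) q.2) ps) \in (state n).1.
Proof.
elim: n ps => [|n IH] ps Hps Hm.
  by case: ps Hm Hps => [|q ps] // Hm; have [] := Hm q (mem_head _ _).
have Hsub : forall x, x \in (state n).1 -> x \in (state n.+1).1.
  by move=> x Hx /=; rewrite mem_cat Hx.
case/lastP: ps Hps Hm => [|ps' q] Hps Hm.
  by apply: Hsub; apply: (IH [::]).
rewrite map_rcons pairwise_rcons in Hps; case/andP: Hps => Hall Hps'.
have Hqin : q \in rcons ps' q by rewrite mem_rcons mem_head.
have Hm' : forall q', q' \in ps' -> q'.1 < q.1 /\ q'.2 \in Al (k + q'.1).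
  move=> q' Hq'; split; last by apply: (proj2 (Hm q' _)); rewrite mem_rcons in_cons Hq' orbT.
  by move/allP: Hall; apply; apply: map_f.
have [Hq1 Hq2] := Hm q Hqin.
move: Hq1; rewrite ltnS leq_eqVlt => /orP [/eqP Hqn|Hlt].
  rewrite map_rcons -cats1 flatten_cat /= cats0 /= mem_cat; apply/orP; right.
  have Hpre := IH ps' Hps' (fun q' Hq' => conj (leq_trans (proj1 (Hm' q' Hq')) (eq_leq Hqn)) (proj2 (Hm' q' Hq'))).
  rewrite Hqn; apply: allpairs_f => //; by rewrite -Hqn.
apply: Hsub; apply: IH; first by rewrite map_rcons pairwise_rcons Hall Hps'.
move=> q'; rewrite mem_rcons in_cons => /orP [/eqP ->|Hq']; first by split.
have [H1 H2] := Hm' q' Hq'; split => //; exact: ltn_trans H1 Hlt.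
Qed.

Hypothesis Hlarge : k_large Al k E s.

Lemma contra : False.
Proof.
have Hw : forall n, is_vword Al (w n) by move=> n; case: (Q_state n).
have Hinc : forall i, (state i).2 < (state i.+1).2.
  by move=> i /=; rewrite -addn1 leq_add2l; case: (Q_state i).
have Hext : ext_le Al k w s.
  move=> l; exists (map (fun i => (state i).2) (iota 0 l.+2)); split.
  - by rewrite size_map size_iota size_mkseq.
  - by [].
  - rewrite sorted_map; apply: (sub_sorted _ (iota_ltn_sorted 0 l.+2)).
    by move=> x y; apply: (homo_ltn ltn_transitive Hinc).
  - move=> i; rewrite size_mkseq => Hi.
    rewrite nth_mkseq //.
    have E1 : nth 0 [seq (state i).2 | i <- iota 0 l.+2] i = (state i).2.
      by rewrite (nth_map 0) ?nth_iota ?size_iota //; apply: ltnW; rewrite ltnS.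
    have E2 : nth 0 [seq (state i).2 | i <- iota 0 l.+2] i.+1 = (state i.+1).2.
      by rewrite (nth_map 0) ?nth_iota ?size_iota.
    rewrite E1 E2 /=; by case: (Q_state i).
have [u [Eu [ps [Hps Hsort Hpm Hu]]]] := Hlarge Hw Hext.
rewrite (sorted_pairwise ltn_transitive) in Hsort.
case/lastP: ps Hps Hsort Hpm Hu => [|ps' [l b]] // _ Hsort Hpm Hu.
rewrite map_rcons pairwise_rcons in Hsort; case/andP: Hsort => Hall Hps'.
have Hpre : flatten (map (fun q => subst_c (w q.1) q.2) ps') \in (state l).1.
  apply: pref => // q Hq; split.
    by move/allP: Hall; apply; apply: map_f.
  by apply: (proj2 (Hpm q _)); rewrite mem_rcons in_cons Hq orbT.
have Hb : b \in Al (k + l) by apply: (proj2 (Hpm (l, b) _)); rewrite mem_rcons mem_head.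
case: (Q_state l) => _ _ _ /(_ _ b Hpre Hb); apply.
by move: Eu; rewrite Hu map_rcons -cats1 flatten_cat /= cats0.
Qed.

End Main.

Theorem fact3p7 (T : eqType) (Al : nat -> seq T)
  (HAne : forall n, 0 < size (Al n))
  (HAinc : forall n a, a \in Al n -> a \in Al n.+1)
  (k : nat) (E : seq T -> Prop)
  (HE : forall u, E u -> is_word Al u)
  (s : nat -> seq (option T))
  (Hs : forall n, is_vword Al (s n))
  (Hlarge : k_large Al k E s) :
  exists (m : nat) (w : seq (option T)),
    vspan (fun n => n <= m) s (fun n => Al (k + n)) w /\
    (forall a, a \in Al k -> E (subst_c w a)).
Proof.
case: (classic (exists (m : nat) (w : seq (option T)),
    vspan (fun n => n <= m) s (fun n => Al (k + n)) w /\
    (forall a, a \in Al k -> E (subst_c w a)))) => // Hn.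
exfalso.
have H : forall m w, vspan (fun n => n <= m) s (fun n => Al (k + n)) w ->
    exists a, a \in Al k /\ ~ E (subst_c w a).
  move=> m w Hv; apply: NNPP => Hno; apply: Hn; exists m, w; split => // a Ha.
  by apply: NNPP => HnE; apply: Hno; exists a.
exact: (@contra T Al HAne HAinc k E s Hs H Hlarge).
Qed.
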